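(* (i) If $j\in A$, then $\lfloor(\varphi-1)(\lfloor\varphi j\rfloor+1)\rfloor=j$. (ii) If $j\in B$, then $\lfloor\varphi\lfloor(\varphi-1)j\rfloor\rfloor+1=j$.
   Context: $\mathbb N=\{1,2,\dots\}$, $\varphi=\frac{1+\sqrt5}{2}$, $A=\{\lfloor n\varphi\rfloor\mid n\in\mathbb N\}$ and $B=\{\lfloor n\varphi^2\rfloor\mid n\in\mathbb N\}$. *)

(* Defs.v *)
From mathcomp Require Import all_boot all_order all_algebra.
From mathcomp Require Import all_classical all_reals.
Set Implicit Arguments. Unset Strict Implicit. Unset Printing Implicit Defensive.
Import Order.TTheory GRing.Theory Num.Theory.
Local Open Scope ring_scope.

Definition phi (R : realType) : R := (1 + Num.sqrt 5) / 2.

Definition inA (R : realType) (j : int) : Prop :=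
  exists n : nat, (0 < n)%N /\ j = Num.floor (n%:R * phi R).

Definition inB (R : realType) (j : int) : Prop :=
  exists n : nat, (0 < n)%N /\ j = Num.floor (n%:R * (phi R) ^+ 2).

(* Main.v *)
Require Import Defs.
From mathcomp Require Import all_boot all_order all_algebra.
From mathcomp Require Import all_classical all_reals.
From mathcomp Require Import lra zify ring.
Import Order.TTheory GRing.Theory Num.Theory.
Local Open Scope ring_scope.

Lemma no_sqrt5 (b n : nat) : (0 < n)%N -> (b ^ 2 = 5 * n ^ 2)%N -> False.
Proof.
move=> n0 E.
have b0 : (0 < b)%N by case: b E => [|b] //=; rewrite exp0n // => /esym/eqP; rewrite muln_eq0 expn_eq0; lia.
have := congr1 (logn 5) E.
rewrite lognM ?expn_gt0 ?n0 // !lognX (logn_prime _ (isT : prime 5)) eqxx.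
lia.
Qed.

Lemma phi_facts (R : realType) : phi R * phi R = phi R + 1 /\ 3/2 < phi R < 2.
Proof.
have s5 : Num.sqrt (5:R) ^+ 2 = 5 by rewrite sqr_sqrtr // ler0n.
have s0 : 0 <= Num.sqrt (5:R) by exact: sqrtr_ge0.
rewrite expr2 in s5.
rewrite /phi; split.
  apply/eqP; rewrite -subr_eq0.
  have -> : (1 + Num.sqrt 5) / 2 * ((1 + Num.sqrt 5) / 2) - ((1 + Num.sqrt 5) / 2 + 1) = (Num.sqrt (5:R) * Num.sqrt 5 - 5) / 4 :> R by field.
  by rewrite s5 subrr mul0r.
apply/andP; split; nra.
Qed.

Lemma phi_irr (R : realType) (n : nat) (a : int) : (0 < n)%N -> a%:~R = n%:R * phi R -> False.
Proof.
move=> n0 E.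
have s5 : Num.sqrt (5:R) * Num.sqrt 5 = 5 by rewrite -expr2 sqr_sqrtr // ler0n.
have E2 : (2 * a - n%:Z)%:~R = n%:R * Num.sqrt (5:R) :> R.
  rewrite rmorphB rmorphM /= E /phi. 
  have -> : (n%:Z)%:~R = n%:R :> R by []. 
  by field.
have E3 : ((2 * a - n%:Z) ^+ 2)%:~R = (5 * n%:Z ^+ 2)%:~R :> R.
  rewrite !rmorphXn /= E2 rmorphM rmorphXn /=.
  have -> : (n%:Z)%:~R = n%:R :> R by [].
  by rewrite exprMn [Num.sqrt _ ^+ 2]expr2 s5 mulrC.
move/eqP: E3; rewrite eqr_int => /eqP E4.
apply: (@no_sqrt5 (absz (2 * a - n%:Z)%R) n n0).
by rewrite -abszX E4 abszM abszX.
Qed.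

Theorem proposition5p6 (R : realType) :
  (forall j : int, inA R j ->
     Num.floor ((phi R - 1) * ((Num.floor (phi R * j%:~R))%:~R + 1)) = j) /\
  (forall j : int, inB R j ->
     Num.floor (phi R * (Num.floor ((phi R - 1) * j%:~R))%:~R) + 1 = j).
Proof.
have [pp /andP[p1 p2]] := phi_facts R.
set p := phi R in pp p1 p2 *.
split.
  move=> j _.
  set m := Num.floor (p * j%:~R).
  have h1 := floor_le (p * j%:~R).
  have h2 := floorD1_gt (p * j%:~R).
  rewrite -/m intrD in h1 h2 *.
  set M := (m%:~R : R) in h1 h2 *; set J := (j%:~R : R) in h1 h2 *.
  have e : p * p * J = p * J + J by rewrite pp mulrDl mul1r.
  have q1 : 0 < (p - 1) * (M + 1 - p * J) by apply: mulr_gt0; lra.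
  have q2 : 0 <= (p - 1) * (p * J - M) by apply: mulr_ge0; lra.
  apply: floor_def; rewrite intrD /= -/J; apply/andP; split; nra.
move=> j [n [n0 ->]].
have sq : n%:R * p ^+ 2 = n%:R * p + (n%:Z)%:~R by rewrite expr2 pp mulrDr mulr1.
rewrite sq floorDrz ?intr_int //.
set a := Num.floor (n%:R * p).
have h1 := floor_le (n%:R * p).
have h2 := floorD1_gt (n%:R * p).
rewrite -/a intrD in h1 h2.
have ha : a%:~R != n%:R * p.
  by apply/eqP => /(@phi_irr R n a n0).
have h1' : a%:~R < n%:R * p by rewrite lt_neqAle ha h1.
have ka : Num.floor ((p - 1) * (a + n%:Z)%:~R) = a.
  apply: floor_def; rewrite !intrD; apply/andP; split.
  have -> : (n%:Z)%:~R = n%:R :> R by [].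
  nra.
  have -> : (n%:Z)%:~R = n%:R :> R by [].
  nra.
rewrite intrKfloor ka; suff -> : Num.floor (p * a%:~R) = a + n%:Z - 1 by rewrite subrK.
apply: floor_def; rewrite !intrD !intrN /=.
have -> : (n%:Z)%:~R = n%:R :> R by [].
apply/andP; split; nra.
Qed.
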